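(* In the setting below, the quasi-cyclic code $C$ is Euclidean LCD if and only if all of the following hold: (I) $g(x)$ is self-reciprocal; (II) $l(x)$ is self-reciprocal; (III) $\gcd(t_{22}(x),g_{12}(x))=1$; (IV) $\gcd\big(r_{22}(x),\ g_{11}(x)\bar g_{11}(x)+g_{12}(x)\bar g_{12}(x)\big)=1$.
   Context: Let $q$ be a prime power, $F=\mathbb{F}_q$, $m\ge1$ with $\gcd(q,m)=1$, and $R=F[x]/\langle x^m-1\rangle$; elements of $R$ are represented by polynomials of degree $<m$ and identified with their coefficient vectors in $F^m$. A quasi-cyclic code of length $2m$ and index $2$ is an $R$-submodule $C\subseteq R^2$. The Euclidean inner product of $(a_1,a_2),(b_1,b_2)\in R^2$ is the sum of the standard dot products of the coefficient vectors of $a_1,b_1$ and of $a_2,b_2$; $C^{\perp_e}$ is the dual with respect to it, and $C$ is Euclidean LCD if $C\cap C^{\perp_e}=\{0\}$. For a nonzero polynomial $f$ of degree $k$, its reciprocal is $f^*(x)=x^kf(x^{-1})$; $f$ is self-reciprocal if $f^*=\alpha f$ for some $\alpha\in F$. For a polynomial $f$ of degree at most $m$, its transpose is $\bar f(x)=x^m f(x^{-1})$. Suppose $C$ is generated as an $R$-module by $(g_{11}(x),g_{12}(x))$ and $(0,g_{22}(x))$, where $g_{11},g_{12},g_{22}\in F[x]$ satisfy: $g_{11}\mid x^m-1$, $g_{22}\mid x^m-1$, $\deg g_{12}<\deg g_{22}$, and $g_{11}g_{22}\mid (x^m-1)g_{12}$. Define $g=\gcd(g_{11},g_{22})$, $l=(x^m-1)/\mathrm{lcm}(g_{11},g_{22})$,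 $g_{11}=g\,g_{11}'$, $g_{22}=g\,g_{22}'$, $r_{11}=\gcd(g_{11}',g_{11}'^* )$, $t_{11}=g_{11}'/r_{11}$, $r_{22}=\gcd(g_{22}',g_{22}'^* )$, $t_{22}=g_{22}'/r_{22}$. *)

(* Defs.v *)
From HB Require Import structures.
From mathcomp Require Import all_boot all_order all_algebra.
Set Implicit Arguments. Unset Strict Implicit. Unset Printing Implicit Defensive.
Import GRing.Theory.
Local Open Scope ring_scope.

Section QC.
Variable F : fieldType.

(* reciprocal f^*(x) = x^(deg f) f(1/x) *)
Definition recip (f : {poly F}) : {poly F} :=
  \poly_(i < size f) f`_(size f - 1 - i).

Definition self_recip (f : {poly F}) : Prop := exists alpha : F, recip f = alpha *: f.

(* transpose  bar f(x) = x^m f(1/x), for deg f <= m *)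
Definition transp (m : nat) (f : {poly F}) : {poly F} :=
  \poly_(i < m.+1) f`_(m - i).

Definition xm1 (m : nat) : {poly F} := 'X^m - 1.

(* lcm of polynomials (up to a nonzero scalar) *)
Definition lcmp (a b : {poly F}) : {poly F} := (a * b) %/ gcdp a b.

(* elements of R = F[x]/<x^m - 1> represented by polys of degree < m *)
Definition inR (m : nat) (p : {poly F}) : bool := (size p <= m)%N.

(* the R-submodule of R^2 generated by (g11,g12) and (0,g22) *)
Definition in_code (m : nat) (g11 g12 g22 : {poly F}) (a : {poly F} * {poly F}) : Prop :=
  exists r1 r2 : {poly F},
    a = ((r1 * g11) %% xm1 m, (r1 * g12 + r2 * g22) %% xm1 m).

Definition eip (m : nat) (a b : {poly F} * {poly F}) : F :=
  \sum_(i < m) (a.1`_i * b.1`_i + a.2`_i * b.2`_i).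

Definition in_dual (m : nat) (g11 g12 g22 : {poly F}) (b : {poly F} * {poly F}) : Prop :=
  [/\ inR m b.1, inR m b.2 & forall c, in_code m g11 g12 g22 c -> eip m c b = 0].

Definition euclid_LCD (m : nat) (g11 g12 g22 : {poly F}) : Prop :=
  forall a, in_code m g11 g12 g22 a -> in_dual m g11 g12 g22 a -> a = (0, 0).

End QC.

(* Main.v *)
Require Import Defs.
From HB Require Import structures.
From mathcomp Require Import all_boot all_order all_algebra all_fingroup all_solvable.
From mathcomp Require Import finfield.
Import FinRing.Theory.
From Stdlib Require Import Classical.
From mathcomp Require Import zify ring.
Import GRing.Theory.
Local Open Scope ring_scope.
Set Implicit Arguments. Unset Strict Implicit. Unset Printing Implicit Defensive.

Section Gen.
Variable F : fieldType.
Implicit Types p q f u v : {poly F}.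

Lemma irr_prime f u v : irreducible_poly f -> f %| u * v -> (f %| u) || (f %| v).
Proof.
move=> irf dv; case: (boolP (coprimep f u)) => cu.
  by rewrite (Gauss_dvdpr _ cu) in dv; rewrite dv orbT.
have hg : gcdp f u %= f.
  apply: (apply_irredp irf); last exact: dvdp_gcdl.
  by rewrite -coprimep_def.
by rewrite -(eqp_dvdl _ hg) dvdp_gcdr.
Qed.

Lemma exists_irr_factor p : (1 < size p)%N ->
  exists f, irreducible_poly f /\ f %| p.
Proof.
move: {2}(size p) (leqnn (size p)) => n; elim: n p => [|n IH] p hs hp.
  by move: hp; rewrite ltnNge (leq_trans hs).
case: (classic (irreducible_poly p)) => irp.
  by exists p; split.
have nf : ~ (forall q, size q != 1 -> q %| p -> q %= p) by move=> H; apply: irp; split.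
have [q nq1] := not_all_ex_not _ _ nf.
have [sq nq2] := imply_to_and _ _ nq1.
have [dq nq3] := imply_to_and _ _ nq2.
have nq : ~~ (q %= p) by apply/negP.
have q0 : q != 0 by apply: contraTneq dq => ->; rewrite dvd0p -size_poly_eq0 -lt0n ltnW.
have sq1 : (1 < size q)%N.
  by move: q0 sq; rewrite -size_poly_eq0; case: (size q) => [|[|]].
have sqp : (size q < size p)%N.
  rewrite ltn_neqAle dvdp_leq ?andbT //; last by rewrite -size_poly_eq0 -lt0n ltnW.
  by apply: contra nq => es; rewrite -(dvdp_size_eqp dq).
have [f [irf dvf]] := IH q (ltnSE (leq_trans sqp hs)) sq1.
by exists f; split => //; apply: dvdp_trans dq.
Qed.

Lemma irr_size f : irreducible_poly f -> (1 < size f)%N.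
Proof. by case. Qed.

Lemma irr_ndvd1 f : irreducible_poly f -> ~~ (f %| 1).
Proof. by move=> /irr_size; rewrite dvdp1; case: (size f) => [|[|]]. Qed.

Lemma coprimeP p q : p != 0 ->
  coprimep p q <-> (forall f, irreducible_poly f -> f %| p -> f %| q -> False).
Proof.
move=> p0; split.
  move=> cp f irf fp fq; have := irr_ndvd1 irf.
  move: cp; rewrite coprimep_def size_poly_eq1 => /eqp_dvdr <-.
  by rewrite dvdp_gcd fp fq.
move=> H; apply/negPn/negP; rewrite coprimep_def => ns.
have g0 : gcdp p q != 0 by rewrite gcdp_eq0 negb_and p0.
have sg : (1 < size (gcdp p q))%N.
  by move: g0 ns; rewrite -size_poly_eq0; case: (size _) => [|[|]].
have [f [irf fg]] := exists_irr_factor sg.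
apply: (H f irf); first exact: dvdp_trans fg (dvdp_gcdl _ _).
exact: dvdp_trans fg (dvdp_gcdr _ _).
Qed.

Variable N : {poly F}.
Hypothesis N0 : N != 0.
Hypothesis sqfN : forall f, irreducible_poly f -> f * f %| N -> False.

Lemma irr_eqp_dvd f h : irreducible_poly f -> irreducible_poly h -> h %| f -> h %= f.
Proof. by move=> irf irh hf; apply: (apply_irredp irf) hf; case: irh => /ltn_eqF; rewrite eq_sym => ->. Qed.

Lemma sqf_dvd X Y : X %| N ->
  (forall f, irreducible_poly f -> f %| X -> f %| Y) -> X %| Y.
Proof.
have [n hs] : exists n, (size X <= n)%N by exists (size X).
elim: n X Y hs => [|n IH] X Y hs XN H.
  by move: hs; rewrite leqn0 size_poly_eq0 => /eqP X0; move: XN; rewrite X0 dvd0p => /eqP N00; move: N0; rewrite N00 eqxx.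
have X0 : X != 0.
  by apply/eqP => X0; move: XN; rewrite X0 dvd0p => /eqP N00; move: N0; rewrite N00 eqxx.
have [le1|gt1] := leqP (size X) 1.
  have : size X == 1 by move: X0 le1; rewrite -size_poly_eq0; case: (size X) => [|[|]].
  by rewrite size_poly_eq1 => /eqp_dvdl ->; rewrite dvd1p.
have [f [irf fX]] := exists_irr_factor gt1.
have fY := H f irf fX.
have f0 : f != 0 by apply: irredp_neq0.
set X1 := X %/ f; set Y1 := Y %/ f.
have eX : X = X1 * f by rewrite divpK.
have eY : Y = Y1 * f by rewrite divpK.
have X10 : X1 != 0 by apply/eqP => h; move: X0; rewrite eX h mul0r eqxx.
have sX1 : (size X1 < size X)%N.
  rewrite eX size_mul //; have := irr_size irf.
  by case: (size f) => [|[|k]] //= _; rewrite !addnS /= ltnS leq_addr.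
have X1N : X1 %| N by apply: dvdp_trans XN; rewrite eX dvdp_mulr.
have : X1 %| Y1.
  apply: IH => //; first by rewrite -ltnS (leq_trans sX1).
  move=> h irh hX1.
  have hY : h %| Y1 * f by rewrite -eY; apply: H => //; rewrite eX dvdp_mulr.
  case/orP: (irr_prime irh hY) => // hf.
  exfalso; apply: (sqfN irf); apply: dvdp_trans XN.
  rewrite eX dvdp_mul2r //; rewrite -(eqp_dvdl _ (irr_eqp_dvd irf irh hf)) //.
by move=> hd; rewrite eX eY dvdp_mul2r.
Qed.

Lemma dvdN_local P : N %| P <-> (forall f, irreducible_poly f -> f %| N -> f %| P).
Proof.
split; first by move=> NP f _ fN; apply: dvdp_trans NP.
by move=> H; apply: sqf_dvd => // f irf fN; apply: H.
Qed.

End Gen.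

Section Sig.
Variable F : fieldType.
Variable m : nat.
Hypothesis hm : (0 < m)%N.
Implicit Types p q f u v : {poly F}.
Local Notation N := (xm1 F m).

Lemma N0 : N != 0.
Proof. by rewrite -size_poly_eq0 /xm1 size_Xn_sub_1. Qed.

Lemma sizeN : size N = m.+1.
Proof. by rewrite /xm1 size_Xn_sub_1. Qed.

Lemma XmkN k : N %| 'X^(m * k) - 1.
Proof. by rewrite exprM -(expr1n _ k) subrXX dvdp_mulr. Qed.

Definition sig p := p \Po 'X^(m.-1).

Lemma sigD p q : sig (p + q) = sig p + sig q.
Proof. exact: comp_polyD. Qed.
Lemma sigB p q : sig (p - q) = sig p - sig q.
Proof. exact: comp_polyB. Qed.
Lemma sigM p q : sig (p * q) = sig p * sig q.
Proof. exact: comp_polyM. Qed.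
Lemma sigC c : sig c%:P = c%:P.
Proof. exact: comp_polyC. Qed.
Lemma sig1 : sig 1 = 1.
Proof. exact: comp_polyC. Qed.

Lemma dvd_sub_comp p q1 q2 : (q1 - q2) %| ((p \Po q1) - (p \Po q2)).
Proof.
rewrite !comp_polyE.
have -> : \sum_(i < size p) p`_i *: q1 ^+ i - \sum_(i < size p) p`_i *: q2 ^+ i
   = \sum_(i < size p) (p`_i *: q1 ^+ i - p`_i *: q2 ^+ i) by rewrite sumrB.
apply: (big_ind (fun x => q1 - q2 %| x)); first exact: dvdp0.
  by move=> x y; apply: dvdp_add.
by move=> i _; rewrite -scalerBr subrXX scalerAr dvdp_mulr.
Qed.

Lemma sigN p : N %| p -> N %| sig p.
Proof.
move=> /dvdpP [q ->]; rewrite sigM dvdp_mull //.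
rewrite /sig /xm1 comp_polyB comp_polyC comp_Xn_poly -exprM mulnC.
exact: XmkN.
Qed.

Lemma sig_sig p : N %| sig (sig p) - p.
Proof.
rewrite /sig -comp_polyA comp_Xn_poly -exprM.
rewrite -{2}(comp_polyXr p); apply: dvdp_trans (dvd_sub_comp _ _ _).
have [m1|m2] : m = 1%N \/ (1 < m)%N by lia.
  by rewrite m1 /xm1 /= expr1 expr0 -opprB dvdpNl.
have -> : (m.-1 * m.-1 = m * (m - 2) + 1)%N by destruct m as [|[|k]] => //=; rewrite !subSS subn0; lia.
rewrite exprD expr1.
have -> : 'X^(m * (m - 2)) * 'X - 'X = ('X^(m * (m - 2)) - 1) * 'X :> {poly F}.
  by rewrite mulrBl mul1r.
by rewrite dvdp_mulr // XmkN.
Qed.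

Lemma mono_sig i : (i <= m)%N -> N %| 'X^(m - i) - ('X^(m.-1)) ^+ i.
Proof.
move=> le; rewrite -exprM.
case: i le => [|i] le.
  by rewrite subn0 muln0 expr0.
have -> : (m.-1 * i.+1 = m * i + (m - i.+1))%N by destruct m as [|k] => //=; rewrite subSS; lia.
rewrite exprD.
have -> : 'X^(m - i.+1) - 'X^(m * i) * 'X^(m - i.+1) = - (('X^(m * i) - 1) * 'X^(m - i.+1)) :> {poly F}.
  by rewrite mulrBl mul1r opprB.
by rewrite dvdpNr dvdp_mulr // XmkN.
Qed.

Lemma transp_sum p : transp m p = \sum_(i < m.+1) p`_i *: 'X^(m - i).
Proof.
rewrite /transp poly_def (reindex_inj rev_ord_inj) /=.
by apply: eq_bigr => i _; rewrite subSS subKn // -ltnS.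
Qed.

Lemma sig_sum p : (size p <= m.+1)%N -> sig p = \sum_(i < m.+1) p`_i *: ('X^(m.-1)) ^+ i.
Proof.
move=> hs; rewrite /sig comp_polyE (big_ord_widen _ (fun i => p`_i *: 'X^(m.-1) ^+ i) hs).
rewrite big_mkcond /=; apply: eq_bigr => i _; case: ifP => // /negbT.
by rewrite -leqNgt => le; rewrite nth_default // scale0r.
Qed.

Lemma transp_sig p : (size p <= m.+1)%N -> N %| transp m p - sig p.
Proof.
move=> hs; rewrite transp_sum sig_sum // -sumrB.
apply: (big_ind (fun x => N %| x)); first exact: dvdp0.
  by move=> x y; apply: dvdp_add.
by move=> i _; rewrite -scalerBr -mul_polyC dvdp_mull // mono_sig // -ltnS.
Qed.

Lemma transp_recip p : (size p <= m.+1)%N -> transp m p = 'X^(m.+1 - size p) * recip p.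
Proof.
move=> hs; apply/polyP => i; rewrite coefXnM /transp /recip !coef_poly.
set s := size p in hs *.
case: (ltnP i m.+1) => h1; case: (ltnP i (m.+1 - s)) => h2.
- rewrite nth_default //; have H : (s <= m - i)%N by lia.
  exact: H.
- have -> : (i - (m.+1 - s) < s)%N by lia.
  by congr nth; lia.
- lia.
- by case: ifP => //; lia.
Qed.

Definition tau p := (p %% N)`_0.

Lemma tau_cong p q : N %| p - q -> tau p = tau q.
Proof.
move=> /modp_eq0P h; rewrite /tau; apply/eqP; rewrite -subr_eq0 -coefB.
by rewrite -modpN -modpD h coef0.
Qed.

Lemma tau_small p : (size p <= m + m)%N -> tau p = p`_0 + p`_m.
Proof.
move=> hs; rewrite /tau.
have e : p = drop_poly m p * N + (take_poly m p + drop_poly m p).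
  by rewrite /xm1 mulrBr mulr1 (addrC (take_poly m p)) addrA subrK addrC poly_take_drop.
rewrite {1}e modp_addl_mul_small.
  by rewrite coefD coef_take_poly hm coef_drop_poly add0n.
rewrite sizeN ltnS; apply: (leq_trans (size_polyD _ _)).
rewrite geq_max size_take_poly size_drop_poly; lia.
Qed.

Lemma tau_shift (R : {poly F}) k : (size R <= m)%N -> (k < m)%N -> tau ('X^(m - k) * R) = R`_k.
Proof.
move=> hs hk; rewrite tau_small.
  rewrite !coefXnM; have -> : (0 < m - k)%N by lia.
  by rewrite ltnNge leq_subr /= add0r subKn // ltnW.
have [->|R0] := eqVneq R 0; first by rewrite mulr0 size_poly0.
rewrite size_mul ?expf_neq0 ?polyX_eq0 // size_polyXn.
have H : (((m - k).+1 + size R).-1 <= m + m)%N by lia.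
exact: H.
Qed.

Lemma eip1_tau (a b : {poly F}) : (size a <= m)%N -> (size b <= m)%N ->
  \sum_(i < m) a`_i * b`_i = tau (a * transp m b).
Proof.
move=> ha hb; rewrite tau_small; last first.
  apply: (leq_trans (size_polyMleq _ _)); have := size_poly m.+1 (fun i => b`_(m - i)).
  rewrite /transp; lia.
rewrite !coefM big_ord1 /transp coef_poly ltnS leq0n subn0 (nth_default _ hb) mulr0 add0r.
rewrite big_ord_recr /= (nth_default _ ha) mul0r addr0.
by apply: eq_bigr => i _; rewrite coef_poly ltnS leq_subr subKn // ltnW.
Qed.

Definition cg p q := N %| p - q.

Lemma cg_refl p : cg p p.
Proof. by rewrite /cg subrr dvdp0. Qed.
Lemma cg_sym p q : cg p q -> cg q p.
Proof. by rewrite /cg -opprB dvdpNr. Qed.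
Lemma cg_trans p q r : cg p q -> cg q r -> cg p r.
Proof. by rewrite /cg => h1 h2; rewrite -(subrK q p) -addrA dvdp_add. Qed.
Lemma cgD p p' q q' : cg p p' -> cg q q' -> cg (p + q) (p' + q').
Proof. by rewrite /cg => h1 h2; rewrite opprD addrACA dvdp_add. Qed.
Lemma cgN p p' : cg p p' -> cg (- p) (- p').
Proof. by rewrite /cg -opprD dvdpNr. Qed.
Lemma cgM p p' q q' : cg p p' -> cg q q' -> cg (p * q) (p' * q').
Proof.
rewrite /cg => h1 h2.
have -> : p * q - p' * q' = (p - p') * q + p' * (q - q') by rewrite mulrBl mulrBr addrA subrK.
by apply: dvdp_add; [apply: dvdp_mulr | apply: dvdp_mull].
Qed.
Lemma cg_sig p q : cg p q -> cg (sig p) (sig q).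
Proof. by rewrite /cg -sigB; apply: sigN. Qed.
Lemma cg_mod p : cg (p %% N) p.
Proof.
by rewrite /cg {2}(divp_eq p N) opprD addrCA subrr addr0 dvdpNr dvdp_mull.
Qed.
Lemma cg0 p : cg p 0 = (N %| p).
Proof. by rewrite /cg subr0. Qed.
Lemma cg_sig2 p : cg (sig (sig p)) p.
Proof. exact: sig_sig. Qed.
Lemma cg_transp p : (size p <= m.+1)%N -> cg (transp m p) (sig p).
Proof. exact: transp_sig. Qed.
Lemma size_mod p : (size (p %% N)%R <= m)%N.
Proof. by rewrite -ltnS -sizeN ltn_modp N0. Qed.

Lemma tauD p q : tau (p + q) = tau p + tau q.
Proof. by rewrite /tau modpD coefD. Qed.

Lemma eip_tau (c a : {poly F} * {poly F}) :
  (size c.1 <= m)%N -> (size c.2 <= m)%N -> (size a.1 <= m)%N -> (size a.2 <= m)%N ->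
  eip m c a = tau (c.1 * transp m a.1 + c.2 * transp m a.2).
Proof.
by move=> h1 h2 h3 h4; rewrite /eip big_split /= tauD -!eip1_tau.
Qed.

Lemma zero_coefs (R : {poly F}) : (size R <= m)%N -> (forall k, (k < m)%N -> R`_k = 0) -> R = 0.
Proof.
move=> hs H; apply/polyP => i; rewrite coef0.
by case: (ltnP i m) => hi; [apply: H | rewrite nth_default // (leq_trans hs hi)].
Qed.

Section Code.
Variables A B D : {poly F}.

Definition LCD' := forall r1 r2 : {poly F},
  N %| sig D * (r1 * B + r2 * D) ->
  N %| r1 * A * sig A + sig B * (r1 * B + r2 * D) ->
  (N %| r1 * A) /\ (N %| r1 * B + r2 * D).

Lemma dual_cond1 (a : {poly F} * {poly F}) (u v : {poly F}) :
  (size a.1 <= m)%N -> (size a.2 <= m)%N ->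
  (forall r : {poly F}, eip m ((r * u) %% N, (r * v) %% N) a = 0) ->
  N %| u * sig a.1 + v * sig a.2.
Proof.
move=> h1 h2 H; set P := u * sig a.1 + v * sig a.2.
rewrite -cg0; apply: cg_trans (cg_sym (cg_mod P)) _; rewrite cg0.
apply/modp_eq0P/zero_coefs; first exact: size_mod.
move=> k hk; rewrite -tau_shift ?size_mod //.
rewrite -(H ('X^(m - k))) eip_tau ?size_mod //=.
apply: tau_cong; apply: cg_sym.
apply: (@cg_trans _ ('X^(m - k) * P)).
  apply: (@cg_trans _ ('X^(m - k) * u * sig a.1 + 'X^(m - k) * v * sig a.2)).
    apply: cgD; apply: cgM; try exact: cg_mod; apply: cg_transp.
      exact: leq_trans h1 (leqnSn m).
    exact: leq_trans h2 (leqnSn m).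
  by rewrite /P mulrDr !mulrA; apply: cg_refl.
apply: cgM; first exact: cg_refl.
by apply: cg_sym; apply: cg_trans (cg_mod _) (cg_mod _).
Qed.

Lemma cg_sigsig_mod p : cg (sig (sig (p %% N))) p.
Proof. exact: cg_trans (cg_sig2 _) (cg_mod _). Qed.

Lemma dvd_sig_cg p q : N %| p -> cg (sig p) q -> N %| q.
Proof. by move=> /sigN; rewrite -!cg0 => h1 h2; apply: cg_trans (cg_sym h2) h1. Qed.

Lemma LCD_iff : euclid_LCD m A B D <-> LCD'.
Proof.
split.
- move=> L r1 r2 h1 h2; set s := r1 * B + r2 * D.
  have e : ((r1 * A) %% N, s %% N) = (0, 0).
  apply: L.
  + by exists r1, r2.
  + split; try exact: size_mod.
    move=> c [q1 [q2 ->]]; rewrite eip_tau ?size_mod //=.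
    rewrite (@tau_cong _ 0); first by rewrite /tau mod0p coef0.
    apply: (@cg_trans _ (q1 * (A * sig (r1 * A) + B * sig s) + q2 * (D * sig s))).
      apply: (@cg_trans _ (q1 * A * sig (r1 * A) + (q1 * B + q2 * D) * sig s)).
        apply: cgD; apply: cgM; try exact: cg_mod.
          apply: cg_trans (cg_transp (leq_trans (size_mod _) (leqnSn m))) _.
          exact: cg_sig (cg_mod _).
        apply: cg_trans (cg_transp (leq_trans (size_mod _) (leqnSn m))) _.
        exact: cg_sig (cg_mod _).
      by rewrite mulrDl !mulrDr !mulrA addrA; apply: cg_refl.
    rewrite -[0]addr0; apply: cgD; rewrite cg0; apply: dvdp_mull.
    * apply: (dvd_sig_cg h2); rewrite (sigD (r1 * A * sig A)) (sigM (r1 * A)) (sigM (sig B)).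
      apply: cgD; last by apply: cgM; [apply: cg_sig2 | apply: cg_refl].
      by rewrite [sig (r1 * A) * _]mulrC; apply: cgM; [apply: cg_sig2 | apply: cg_refl].
    * apply: (dvd_sig_cg h1); rewrite (sigM (sig D)).
      by apply: cgM; [apply: cg_sig2 | apply: cg_refl].
  by case: e => /modp_eq0P -> /modp_eq0P ->.
- move=> L a [r1 [r2 ea]] [s1 s2 hd].
  have c1 : N %| A * sig a.1 + B * sig a.2.
    apply: dual_cond1 => // r; apply: hd; exists r, 0.
    by rewrite mul0r addr0.
  have c2 : N %| 0 * sig a.1 + D * sig a.2.
    apply: dual_cond1 => // r; apply: hd; exists 0, r.
    by rewrite !mul0r add0r mulr0.
  rewrite mul0r add0r in c2.
  set s := r1 * B + r2 * D.
  have e1 : a.1 = (r1 * A) %% N by rewrite ea.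
  have e2 : a.2 = s %% N by rewrite ea.
  have [h1 h2] : (N %| r1 * A) /\ (N %| s).
    apply: L.
      apply: (dvd_sig_cg c2); rewrite sigM.
      by apply: cgM; [apply: cg_refl | rewrite e2; apply: cg_sigsig_mod].
    apply: (dvd_sig_cg c1); rewrite sigD !sigM.
    apply: cgD; last by apply: cgM; [apply: cg_refl | rewrite e2; apply: cg_sigsig_mod].
    rewrite mulrC; apply: cgM; [rewrite e1; apply: cg_sigsig_mod | apply: cg_refl].
  by rewrite ea; move/modp_eq0P: h1 => ->; move/modp_eq0P: h2 => ->.
Qed.
End Code.

Section Loc.
Hypothesis hchar : (m%:R : F) != 0.

Lemma sqfN f : irreducible_poly f -> f * f %| N -> False.
Proof.
move=> irf /dvdpP [q eq].
have fN : f %| N by rewrite eq dvdp_mull // dvdp_mulr.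
have hd : f %| 'X^(m.-1).
  have : f %| N^`().
    rewrite eq !derivM; apply: dvdp_add; first by apply: dvdp_mull; apply: dvdp_mulr; exact: dvdpp.
    by apply: dvdp_mull; apply: dvdp_add; [apply: dvdp_mull | apply: dvdp_mulr]; exact: dvdpp.
  by rewrite /xm1 derivB derivXn derivC subr0 -scaler_nat dvdpZr.
have : f %| 1.
  have -> : 1 = 'X^m - N :> {poly F} by rewrite /xm1 opprB addrC subrK.
  apply: dvdp_sub fN.
  have -> : 'X^m = 'X * 'X^(m.-1) :> {poly F} by rewrite -exprS prednK.
  exact: dvdp_mull.
by move=> h; move: (irr_ndvd1 irf); rewrite h.
Qed.

Section Code2.
Variables A B D : {poly F}.

Definition bad (a b d a2 b2 d2 e : bool) : bool :=
  if d then (if d2 then ~~ (a && b) && e else [&& b, ~~ a & a2])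
  else (if d2 then ~~ a || b2 else ~~ a && a2).

Definition badf f := bad (f %| A) (f %| B) (f %| D) (f %| sig A) (f %| sig B) (f %| sig D)
  (f %| A * sig A + B * sig B).

Lemma key_loc f X : f %| N -> (N %| (N %/ f) * X) = (f %| X).
Proof.
move=> fN; have e0 : N %/ f != 0.
  apply/eqP => h; move: N0; rewrite -(divpK fN) h mul0r eqxx //.
set e := N %/ f in e0 *.
have -> : N = e * f by rewrite /e divpK.
by rewrite dvdp_mul2l.
Qed.

Lemma L_at f r1 r2 : LCD' A B D -> f %| N ->
  f %| sig D * (r1 * B + r2 * D) ->
  f %| r1 * A * sig A + sig B * (r1 * B + r2 * D) ->
  (f %| r1 * A) /\ (f %| r1 * B + r2 * D).
Proof.
move=> L fN h1 h2; set e := N %/ f.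
have := L (e * r1) (e * r2).
have -> : sig D * (e * r1 * B + e * r2 * D) = e * (sig D * (r1 * B + r2 * D)) by ring.
have -> : e * r1 * A * sig A + sig B * (e * r1 * B + e * r2 * D)
   = e * (r1 * A * sig A + sig B * (r1 * B + r2 * D)) by ring.
have -> : e * r1 * A = e * (r1 * A) by ring.
have -> : e * r1 * B + e * r2 * D = e * (r1 * B + r2 * D) by ring.
by rewrite !key_loc //; apply.
Qed.

Lemma B1 : LCD' A B D -> forall f, irreducible_poly f -> f %| N -> ~~ badf f.
Proof.
move=> L f irf fN; apply/negP; rewrite /badf /bad.
have pr := irr_prime irf.
have [d|nd] := boolP (f %| D); have [d2|nd2] := boolP (f %| sig D) => /=.
- move=> /andP [nab he].
  have [] := @L_at f 1 0 L fN.
  + by apply: dvdp_mulr.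
  + have -> : 1 * A * sig A + sig B * (1 * B + 0 * D) = A * sig A + B * sig B by ring.
    by [].
  + by rewrite !mul1r mul0r addr0 => ha hb; move: nab; rewrite ha hb.
- move=> /and3P [hb na ha2].
  have [] := @L_at f 1 0 L fN.
  + by rewrite mul1r mul0r addr0 dvdp_mull.
  + by rewrite !mul1r mul0r addr0; apply: dvdp_add; apply: dvdp_mull.
  + by rewrite mul1r (negPf na).
- have [b2|nb2] := boolP (f %| sig B) => /= H.
  + have [] := @L_at f 0 1 L fN.
    * by apply: dvdp_mulr.
    * by rewrite !mul0r add0r mul1r dvdp_mulr.
    * by rewrite !mul0r add0r mul1r (negPf nd).
  + rewrite orbF in H.
    have [] := @L_at f (sig B * D) (- (A * sig A + sig B * B)) L fN.
    * by apply: dvdp_mulr.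
    * have -> : sig B * D * A * sig A + sig B * (sig B * D * B + - (A * sig A + sig B * B) * D) = 0 by ring.
      exact: dvdp0.
    * move=> h _; move: (pr _ _ h); rewrite (negPf H) orbF => /pr.
      by rewrite (negPf nb2) (negPf nd).
- move=> /andP [na ha2].
  have [] := @L_at f D (- B) L fN.
  + have -> : D * B + - B * D = 0 by ring.
    by rewrite mulr0 dvdp0.
  + have -> : D * A * sig A + sig B * (D * B + - B * D) = D * A * sig A by ring.
    by rewrite dvdp_mull.
  + by move=> h _; move: (pr _ _ h); rewrite (negPf nd) (negPf na).
Qed.

Lemma B2 : (forall f, irreducible_poly f -> f %| N -> ~~ badf f) -> LCD' A B D.
Proof.
move=> H r1 r2 h1 h2; set s := r1 * B + r2 * D.
suff loc : forall f, irreducible_poly f -> f %| N -> (f %| r1 * A) && (f %| s).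
  by split; apply/(dvdN_local N0 sqfN) => f irf fN; case/andP: (loc f irf fN).
move=> f irf fN; have pr := irr_prime irf.
have h1f : f %| sig D * s := dvdp_trans fN h1.
have h2f : f %| r1 * A * sig A + sig B * s := dvdp_trans fN h2.
have nb := H f irf fN; rewrite /badf /bad in nb.
have [d|nd] := boolP (f %| D); have [d2|nd2] := boolP (f %| sig D).
- rewrite d d2 /= in nb; move: nb; rewrite negb_and negbK => /orP [/andP [ha hb]|ne].
    by rewrite dvdp_mull //= /s; apply: dvdp_add; apply: dvdp_mull.
  have : f %| r1 * (A * sig A + B * sig B) + r2 * D * sig B.
    by have <- : r1 * A * sig A + sig B * s = r1 * (A * sig A + B * sig B) + r2 * D * sig B by rewrite /s; ring.
  rewrite dvdp_addl; last by apply: dvdp_mulr; apply: dvdp_mull.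
  move/pr; rewrite (negPf ne) orbF => hr.
  by rewrite dvdp_mulr //= /s; apply: dvdp_add; [apply: dvdp_mulr | apply: dvdp_mull].
- rewrite d (negPf nd2) /= in nb.
  move: (pr _ _ h1f); rewrite (negPf nd2) /= => fs; rewrite fs andbT.
  move: h2f; rewrite dvdp_addl; last exact: dvdp_mull _ fs.
  move=> /pr.
  case/orP => // ha2.
  have : ~~ (f %| B) || (f %| A) by move: nb; rewrite ha2; case: (f %| B); case: (f %| A).
  case/orP => [nb'|ha]; last by rewrite dvdp_mull.
  move: fs; rewrite /s dvdp_addl; last exact: dvdp_mull _ d.
  move=> /pr; by rewrite (negPf nb') orbF => hr; rewrite dvdp_mulr.
- rewrite (negPf nd) d2 /= in nb.
  move: nb; rewrite negb_or negbK => /andP [ha nb2]; rewrite dvdp_mull //=.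
  move: h2f; rewrite dvdp_addr; last by apply: dvdp_mulr; apply: dvdp_mull.
  by move=> /pr; rewrite (negPf nb2).
- rewrite (negPf nd) (negPf nd2) /= in nb.
  move: (pr _ _ h1f); rewrite (negPf nd2) /= => fs; rewrite fs andbT.
  move: h2f; rewrite dvdp_addl; last exact: dvdp_mull _ fs.
  move=> /pr.
  case/orP => // ha2.
  have ha : f %| A by move: nb; rewrite ha2; case: (f %| A).
  by rewrite dvdp_mull.
Qed.

End Code2.
Lemma dvd_cg f p q : f %| N -> cg p q -> (f %| p) = (f %| q).
Proof.
move=> fN h; have e : p = (p - q) + q by rewrite subrK.
by rewrite {1}e dvdp_addr //; apply: dvdp_trans fN h.
Qed.

Lemma sig_dvd p q : p %| q -> sig p %| sig q.
Proof. by move=> /dvdpP [w ->]; rewrite sigM dvdp_mull. Qed.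

Definition fp f := gcdp N (sig f).

Lemma fp_dvd f (X : {poly F}) : irreducible_poly f -> f %| N -> (fp f %| X) = (f %| sig X).
Proof.
move=> irf fN; apply/idP/idP.
- have [u hu] := Bezoutp N (sig f).
  rewrite /fp -(eqp_dvdl _ hu) => /sig_dvd; apply: dvdp_trans.
  rewrite sigD !sigM; apply: dvdp_add; apply: dvdp_mull.
    exact: dvdp_trans fN (sigN (dvdpp N)).
  by rewrite (dvd_cg fN (cg_sig2 f)) dvdpp.
- move=> /dvdpP [w ew].
  have hg : fp f %| sig (sig X) by rewrite ew sigM dvdp_mull // dvdp_gcdr.
  have hN : fp f %| sig (sig X) - X := dvdp_trans (dvdp_gcdl _ _) (cg_sig2 X).
  have -> : X = sig (sig X) - (sig (sig X) - X) by rewrite opprB addrC subrK.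
  exact: dvdp_sub.
Qed.

Lemma fp_sig f (X : {poly F}) : irreducible_poly f -> f %| N -> (fp f %| sig X) = (f %| X).
Proof. by move=> irf fN; rewrite fp_dvd // (dvd_cg fN (cg_sig2 X)). Qed.

Lemma fp_N f : fp f %| N.
Proof. exact: dvdp_gcdl. Qed.

Lemma fp_irr f : irreducible_poly f -> f %| N -> irreducible_poly (fp f).
Proof.
move=> irf fN.
have fp0 : fp f != 0 by rewrite /fp gcdp_eq0 negb_and N0.
have prime u v : fp f %| u * v -> (fp f %| u) || (fp f %| v).
  by rewrite !fp_dvd // sigM; apply: irr_prime.
have n1 : ~~ (fp f %| 1) by rewrite fp_dvd // sig1 irr_ndvd1.
split.
  by move: fp0 n1; rewrite dvdp1 -size_poly_eq0; case: (size (fp f)) => [|[|]].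
move=> q sq qd; have q0 : q != 0 by apply/eqP => q0; move: qd; rewrite q0 dvd0p => /eqP h; rewrite h eqxx in fp0.
move: (qd) => /dvdpP [w ew].
have hwq : fp f %| w * q by rewrite -ew dvdpp.
case/orP: (prime w q hwq) => [|hq].
  move=> /dvdpP [z ez]; exfalso; move: sq; apply/negP/negPn.
  have w0 : w != 0 by apply/eqP => w0; rewrite ew w0 mul0r eqxx in fp0.
  have z0 : z != 0 by apply/eqP => z0; rewrite ez z0 mul0r eqxx in w0.
  have := congr1 (fun p => size p) ew; rewrite ez -mulrA size_mul // ?mulf_neq0 //.
  rewrite size_mul //; have := size_poly_gt0 z; have := size_poly_gt0 q.
  rewrite z0 q0 /=; set sf := size (fp f); set sz := size z; set sq' := size q.
  by move=> h1 h2 h3; apply/eqP; lia.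
by rewrite /eqp qd hq.
Qed.

Lemma nX f k : irreducible_poly f -> f %| N -> ~~ (f %| 'X^k).
Proof.
move=> irf fN; elim: k => [|k IH]; first by rewrite expr0 irr_ndvd1.
rewrite exprS; apply/negP => /(irr_prime irf); rewrite (negPf IH) orbF => fX.
have : f %| 1.
  have -> : 1 = 'X^m - N :> {poly F} by rewrite /xm1 opprB addrC subrK.
  apply: dvdp_sub fN.
  have -> : 'X^m = 'X^(m.-1) * 'X :> {poly F} by rewrite -exprSr prednK.
  exact: dvdp_mull.
by apply/negP; apply: irr_ndvd1.
Qed.

Lemma dvdXk f k r : irreducible_poly f -> f %| N -> (f %| 'X^k * r) = (f %| r).
Proof.
move=> irf fN; apply/idP/idP; last exact: dvdp_mull.
by move/(irr_prime irf); rewrite (negPf (nX k irf fN)).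
Qed.

Lemma recip_sig f p : irreducible_poly f -> f %| N -> (size p <= m.+1)%N ->
  (f %| recip p) = (f %| sig p).
Proof.
move=> irf fN hs; rewrite -(dvd_cg fN (cg_transp hs)) transp_recip //.
by rewrite dvdXk.
Qed.

Lemma size_dvdN (X : {poly F}) : X %| N -> (size X <= m.+1)%N.
Proof. by move=> h; rewrite -sizeN dvdp_leq // N0. Qed.

Lemma neq0_dvdN (X : {poly F}) : X %| N -> X != 0.
Proof. by move=> h; apply/eqP => X0; move: h; rewrite X0 dvd0p => /eqP h; move: N0; rewrite h eqxx. Qed.

Lemma recip_neq0 (X : {poly F}) : X != 0 -> recip X != 0.
Proof.
move=> X0; apply/eqP => /(congr1 (fun p => p`_0)); rewrite /recip coef_poly coef0.
rewrite size_poly_gt0 X0 subn0 subn1 -lead_coefE => /eqP; rewrite lead_coef_eq0.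
by apply/negP.
Qed.

Lemma self_recipP (X : {poly F}) : X %| N ->
  self_recip X <-> (forall f, irreducible_poly f -> f %| N -> (f %| X) = (f %| sig X)).
Proof.
move=> XN; have X0 := neq0_dvdN XN; have hs := size_dvdN XN; split.
- move=> [c ec] f irf fN; rewrite -recip_sig // ec.
  have c0 : c != 0 by apply/eqP => c0; move: (recip_neq0 X0); rewrite ec c0 scale0r eqxx.
  by rewrite dvdpZr.
- move=> H.
  have : X %| recip X.
    apply: (sqf_dvd N0 sqfN XN) => f irf fX.
    have fN := dvdp_trans fX XN.
    by rewrite recip_sig // -H.
  move=> /dvdpP [w ew]; exists (w`_0).
  have R0 := recip_neq0 X0.
  have w0 : w != 0 by apply/eqP => w0; rewrite ew w0 mul0r eqxx in R0.
  have sR : (size (recip X) <= size X)%N by apply: size_poly.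
  have sw : size w = 1%N.
    move: sR; rewrite ew size_mul //; have := size_poly_gt0 w; have := size_poly_gt0 X.
    rewrite w0 X0 /=; set a := size w; set b := size X => h1 h2 h3.
    have H1 : (a = 1)%N by lia.
    exact: H1.
  by rewrite ew {1}(size1_polyC (eq_leq sw)) mul_polyC.
Qed.

Section Code3.
Variables A B D : {poly F}.
Hypotheses (hA : A %| N) (hD : D %| N) (hB : (size B < size D)%N) (hABD : A * D %| N * B).

Let g := gcdp A D.
Let D' := D %/ g.
Let lc := lcmp A D.
Let l := N %/ lc.
Let r22 := gcdp D' (recip D').
Let t22 := D' %/ r22.

Let A0 : A != 0. Proof. exact: neq0_dvdN. Qed.
Let D0 : D != 0. Proof. exact: neq0_dvdN. Qed.
Let g0 : g != 0. Proof. by rewrite /g gcdp_eq0 negb_and A0. Qed.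
Let eD : D = D' * g. Proof. by rewrite /D' divpK // dvdp_gcdr. Qed.

Lemma Lg h : (h %| g) = (h %| A) && (h %| D).
Proof. exact: dvdp_gcd. Qed.

Lemma LD' h : irreducible_poly h -> h %| N -> (h %| D') = (h %| D) && ~~ (h %| A).
Proof.
move=> irh hN; apply/idP/idP.
- move=> hD'; have hd : h %| D by rewrite eD dvdp_mulr.
  rewrite hd /=; apply/negP => ha.
  have hg : h %| g by rewrite Lg ha hd.
  apply: (sqfN irh); apply: dvdp_trans hD; rewrite eD; exact: dvdp_mul.
- case/andP => hd na; move: hd; rewrite eD => /(irr_prime irh) /orP [//|].
  by rewrite Lg (negPf na).
Qed.

Lemma D'N : D' %| N.
Proof. by apply: dvdp_trans hD; rewrite eD dvdp_mulr. Qed.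

Lemma lcE : lc = A * D'.
Proof. by rewrite /lc /lcmp -/g eD mulrA mulpK. Qed.

Lemma lcN : lc %| N.
Proof.
rewrite lcE Gauss_dvdp ?hA ?D'N //.
apply/coprimeP => // f irf fA fD'.
have fN := dvdp_trans fA hA.
by move: fD'; rewrite LD' // fA andbF.
Qed.

Lemma eN : N = l * lc.
Proof. by rewrite /l divpK // lcN. Qed.

Lemma lN : l %| N.
Proof. by rewrite eN dvdp_mulr. Qed.

Lemma Llc h : irreducible_poly h -> h %| N -> (h %| lc) = (h %| A) || (h %| D).
Proof.
move=> irh hN; rewrite lcE; apply/idP/idP.
  by move/(irr_prime irh); rewrite LD' //; case: (h %| A); case: (h %| D).
case/orP => [ha|hd]; first by rewrite dvdp_mulr.
case: (boolP (h %| A)) => ha; first by rewrite dvdp_mulr.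
by rewrite dvdp_mull // LD' // hd ha.
Qed.

Lemma Ll h : irreducible_poly h -> h %| N -> (h %| l) = ~~ (h %| A) && ~~ (h %| D).
Proof.
move=> irh hN; rewrite -negb_or -Llc //; apply/idP/idP.
  move=> hl; apply/negP => hlc; apply: (sqfN irh); rewrite eN; exact: dvdp_mul.
move=> nlc; move: hN; rewrite eN => /(irr_prime irh).
by rewrite (negPf nlc) orbF.
Qed.

Lemma Lr22 h : irreducible_poly h -> h %| N -> (h %| r22) = (h %| D') && (h %| sig D').
Proof. by move=> irh hN; rewrite dvdp_gcd recip_sig // size_dvdN // D'N. Qed.

Lemma Lt22 h : irreducible_poly h -> h %| N -> (h %| t22) = (h %| D') && ~~ (h %| r22).
Proof.
move=> irh hN.
have e : D' = t22 * r22 by rewrite /t22 divpK // dvdp_gcdl.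
apply/idP/idP.
- move=> ht; have hd : h %| D' by rewrite e dvdp_mulr.
  rewrite hd /=; apply/negP => hr.
  apply: (sqfN irh); apply: dvdp_trans D'N; rewrite e; exact: dvdp_mul.
- case/andP => hd nr; move: hd; rewrite e => /(irr_prime irh).
  by rewrite (negPf nr) orbF.
Qed.

Lemma Lcons h : irreducible_poly h -> h %| N -> h %| A -> h %| D -> h %| B.
Proof.
move=> irh hN ha hd.
have hh : h * h %| N * B by apply: dvdp_trans hABD; exact: dvdp_mul.
set N1 := N %/ h.
have eN1 : N = h * N1 by rewrite /N1 mulrC divpK.
have h0 : h != 0 by apply: irredp_neq0.
have hNB : h %| N1 * B by rewrite -(dvdp_mul2l _ _ h0) mulrA -eN1.
case/orP: (irr_prime irh hNB) => // hN1.
exfalso; apply: (sqfN irh); rewrite eN1; exact: dvdp_mul (dvdpp h) hN1.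
Qed.

Let E0 := A * sig A + B * sig B.

Lemma LE0 f : irreducible_poly f -> f %| N -> (fp f %| E0) = (f %| E0).
Proof.
move=> irf fN; rewrite fp_dvd //; apply: dvd_cg => //.
rewrite /E0 sigD !sigM; apply: cgD; rewrite mulrC; apply: cgM; try apply: cg_refl; exact: cg_sig2.
Qed.

Lemma badf_fp f : irreducible_poly f -> f %| N ->
  badf A B D (fp f) = bad (f %| sig A) (f %| sig B) (f %| sig D) (f %| A) (f %| B) (f %| D) (f %| E0).
Proof. by move=> irf fN; rewrite /badf -/E0 LE0 // !fp_sig // !fp_dvd. Qed.

Definition C (a b d a2 b2 d2 e : bool) :=
 [&& (a && d) == (a2 && d2), (~~a && ~~d) == (~~a2 && ~~d2),
     ~~ (((d && ~~a) && ~~ ((d && ~~a) && (d2 && ~~a2))) && b) &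
     ~~ [&& (d && ~~a) && (d2 && ~~a2) & e]].

Lemma propl a b d a2 b2 d2 e : (a && d ==> b) -> (a2 && d2 ==> b2) -> (a && b ==> e) -> (a2 && b2 ==> e) ->
  (~~ bad a b d a2 b2 d2 e && ~~ bad a2 b2 d2 a b d e) = (C a b d a2 b2 d2 e && C a2 b2 d2 a b d e).
Proof. by case: a; case: b; case: d; case: a2; case: b2; case: d2; case: e. Qed.

Definition Cf f := C (f %| A) (f %| B) (f %| D) (f %| sig A) (f %| sig B) (f %| sig D) (f %| E0).

Lemma Cf_fp f : irreducible_poly f -> f %| N ->
  Cf (fp f) = C (f %| sig A) (f %| sig B) (f %| sig D) (f %| A) (f %| B) (f %| D) (f %| E0).
Proof. by move=> irf fN; rewrite /Cf LE0 // !fp_sig // !fp_dvd. Qed.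

Lemma propl_f f : irreducible_poly f -> f %| N ->
  (~~ badf A B D f && ~~ badf A B D (fp f)) = (Cf f && Cf (fp f)).
Proof.
move=> irf fN; rewrite badf_fp // Cf_fp //; apply: propl.
- by apply/implyP => /andP [ha hd]; apply: Lcons.
- apply/implyP => /andP [ha hd]; rewrite -fp_dvd //.
  by apply: (Lcons (fp_irr irf fN) (fp_N f)); rewrite fp_dvd.
- by apply/implyP => /andP [ha hb]; rewrite /E0; apply: dvdp_add; apply: dvdp_mulr.
- by apply/implyP => /andP [ha hb]; rewrite /E0; apply: dvdp_add; apply: dvdp_mull.
Qed.

Lemma local_equiv : (forall f, irreducible_poly f -> f %| N -> ~~ badf A B D f) <->
  (forall f, irreducible_poly f -> f %| N -> Cf f).
Proof.
split => H f irf fN.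
- have := propl_f irf fN; rewrite H // H ?fp_N //; last exact: fp_irr.
  by move=> /esym /andP [].
- have := propl_f irf fN; rewrite H // H ?fp_N //; last exact: fp_irr.
  by move=> /andP [].
Qed.

Lemma coprime_loc X Y : X %| N ->
  coprimep X Y <-> (forall f, irreducible_poly f -> f %| N -> ~~ ((f %| X) && (f %| Y))).
Proof.
move=> XN; rewrite coprimeP; last exact: neq0_dvdN.
split=> H f irf.
- by move=> fN; apply/negP => /andP [h1 h2]; apply: (H f irf h1 h2).
- move=> fX fY; have := H f irf (dvdp_trans fX XN); by rewrite fX fY.
Qed.

Lemma gN : g %| N.
Proof. exact: dvdp_trans (dvdp_gcdl _ _) hA. Qed.

Lemma condI : self_recip g <->
  (forall f, irreducible_poly f -> f %| N -> ((f %| A) && (f %| D)) == ((f %| sig A) && (f %| sig D))).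
Proof.
rewrite self_recipP; last exact: gN.
have hfp f : irreducible_poly f -> f %| N -> (f %| sig g) = (f %| sig A) && (f %| sig D).
  by move=> irf fN; rewrite -fp_dvd // Lg !fp_dvd.
split=> H f irf fN; have := H f irf fN; rewrite Lg hfp //.
  by move=> ->.
by move/eqP.
Qed.

Lemma condII : self_recip l <->
  (forall f, irreducible_poly f -> f %| N -> (~~ (f %| A) && ~~ (f %| D)) == (~~ (f %| sig A) && ~~ (f %| sig D))).
Proof.
rewrite self_recipP; last exact: lN.
have hfp f : irreducible_poly f -> f %| N -> (f %| sig l) = ~~ (f %| sig A) && ~~ (f %| sig D).
  move=> irf fN; rewrite -fp_dvd // Ll; [by rewrite !fp_dvd | exact: fp_irr | exact: fp_N].
split=> H f irf fN; have := H f irf fN; rewrite Ll // hfp //.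
  by move=> ->.
by move/eqP.
Qed.

Lemma Lt22f f : irreducible_poly f -> f %| N -> (f %| t22) =
  (((f %| D) && ~~ (f %| A)) && ~~ (((f %| D) && ~~ (f %| A)) && ((f %| sig D) && ~~ (f %| sig A)))).
Proof.
move=> irf fN; rewrite Lt22 // Lr22 // LD' // -fp_dvd // LD'; [by rewrite !fp_dvd | exact: fp_irr | exact: fp_N].
Qed.

Lemma Lr22f f : irreducible_poly f -> f %| N -> (f %| r22) =
  (((f %| D) && ~~ (f %| A)) && ((f %| sig D) && ~~ (f %| sig A))).
Proof.
move=> irf fN; rewrite Lr22 // LD' // -fp_dvd // LD'; [by rewrite !fp_dvd | exact: fp_irr | exact: fp_N].
Qed.

Lemma t22N : t22 %| N.
Proof.
apply: dvdp_trans D'N.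
have e : D' = t22 * r22 by rewrite /t22 divpK // dvdp_gcdl.
by rewrite e dvdp_mulr.
Qed.

Lemma r22N : r22 %| N.
Proof. exact: dvdp_trans (dvdp_gcdl _ _) D'N. Qed.

Lemma condIII : coprimep t22 B <->
  (forall f, irreducible_poly f -> f %| N ->
    ~~ ((((f %| D) && ~~ (f %| A)) && ~~ (((f %| D) && ~~ (f %| A)) && ((f %| sig D) && ~~ (f %| sig A)))) && (f %| B))).
Proof.
rewrite coprime_loc; last exact: t22N.
by split=> H f irf fN; have := H f irf fN; rewrite Lt22f.
Qed.

Lemma sizeA : (size A <= m.+1)%N.
Proof. exact: size_dvdN. Qed.

Lemma sizeB : (size B <= m.+1)%N.
Proof. by apply: ltnW; apply: leq_trans hB (size_dvdN hD). Qed.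

Lemma condIV : coprimep r22 (A * transp m A + B * transp m B) <->
  (forall f, irreducible_poly f -> f %| N ->
    ~~ [&& ((f %| D) && ~~ (f %| A)) && ((f %| sig D) && ~~ (f %| sig A)) & (f %| E0)]).
Proof.
rewrite coprime_loc; last exact: r22N.
have hE f : f %| N -> (f %| A * transp m A + B * transp m B) = (f %| E0).
  move=> fN; apply: dvd_cg => //; rewrite /E0.
  apply: cgD; apply: cgM; try apply: cg_refl; apply: cg_transp.
    exact: sizeA.
  exact: sizeB.
by split=> H f irf fN; have := H f irf fN; rewrite Lr22f // hE.
Qed.

Lemma conds_iff :
  [/\ self_recip g, self_recip l, coprimep t22 B & coprimep r22 (A * transp m A + B * transp m B)]
  <-> (forall f, irreducible_poly f -> f %| N -> Cf f).
Proof.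
split.
  case=> /condI h1 /condII h2 /condIII h3 /condIV h4 f irf fN; rewrite /Cf /C.
  by apply/and4P; split; [exact: h1 | exact: h2 | exact: h3 | exact: h4].
move=> H; split; [apply/condI | apply/condII | apply/condIII | apply/condIV] => f irf fN;
  by have := H f irf fN; rewrite /Cf /C; case/and4P.
Qed.

End Code3.

End Loc.

End Sig.

Lemma charm (F : finFieldType) m : coprime #|F| m -> (m%:R : F) != 0.
Proof.
move=> cm; have [p pr pc] := finPcharP F.
have h : (1 : F) *+ #|F| = 0.
  by rewrite -zmodXgE -cardsT expg_cardG ?inE.
have pF : (p %| #|F|)%N by rewrite (dvdn_pcharf pc) h.
apply/negP; rewrite -(dvdn_pcharf pc) => pm.
have : (p %| gcdn #|F| m)%N by rewrite dvdn_gcd pF pm.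
by rewrite (eqP cm) dvdn1 => /eqP p1; rewrite p1 in pr.
Qed.

Theorem theorem3p1 (F : finFieldType) (m : nat) (g11 g12 g22 : {poly F}) :
  (0 < m)%N -> coprime #|F| m ->
  g11 %| xm1 F m -> g22 %| xm1 F m -> (size g12 < size g22)%N ->
  g11 * g22 %| xm1 F m * g12 ->
  let g := gcdp g11 g22 in
  let l := xm1 F m %/ lcmp g11 g22 in
  let g11' := g11 %/ g in
  let g22' := g22 %/ g in
  let r11 := gcdp g11' (recip g11') in
  let t11 := g11' %/ r11 in
  let r22 := gcdp g22' (recip g22') in
  let t22 := g22' %/ r22 in
  euclid_LCD m g11 g12 g22 <->
  [/\ self_recip g, self_recip l, coprimep t22 g12 &
      coprimep r22 (g11 * transp m g11 + g12 * transp m g12)].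
Proof.
move=> hm cm hA hD hB hABD g l g11' g22' r11 t11 r22 t22.
have hchar := charm cm.
apply: (iff_trans (LCD_iff hm g11 g12 g22)).
apply: (iff_trans (_ : _ <-> (forall f, irreducible_poly f -> f %| xm1 F m -> ~~ badf m g11 g12 g22 f))).
  split; [move=> L; exact: (B1 hm L) | move=> H; exact: (B2 hm hchar H)].
apply: (iff_trans (local_equiv hm hchar hABD)).
exact: (iff_sym (conds_iff hm hchar hA hD hB)).
Qed.
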